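(* Let $\mathbf P=(P,\leq,{}',0,1)$ be an orthogonal orthocomplemented lub-complete poset. Then the following conditions are equivalent: (i) $\mathbf P$ is a Boolean algebra. (ii) There exists a binary operator $\odot_C$ such that $x\odot_C y\leq_1 z$ if and only if $x\leq_2 y\rightarrow_C z$ for all $x,y,z\in P$.
   Context: $(P,\leq,{}',0,1)$ is a bounded poset with an antitone involution ${}'$; orthogonal means $x\leq y'$ implies $x\vee y$ exists; orthocomplemented means $x\vee x'=1$ for all $x$; lub-complete means for every lower bound $x$ of a finite subset $M$ there is a maximal lower bound of $M$ above $x$. For $A\subseteq P$, $U(A)$ is the set of upper bounds, $U(x,y)=U(\{x,y\})$, $\mathrm{Min}\,A$ is the set of minimal elements of $A$. The classical implication is $x\rightarrow_C y:=\mathrm{Min}\,U(x',y)\subseteq P$. The operator $\odot_C$ is a map $P^2\to 2^P$ (elements identified with singletons). For $A,B\subseteq P$: $A\leq_1 B$ means for every $x\in A$ there is $y\in B$ with $x\leq y$; $A\leq_2 B$ means for every $y\in B$ there is $x\in A$ with $x\leq y$. *)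

(* Defs.v *)
From Stdlib Require Import List.
Set Implicit Arguments.

Section Defs.
Variable T : Type.
Variable le : T -> T -> Prop.
Variable c : T -> T.
Variable zero one : T.

Record bounded_poset_inv : Prop := {
  le_refl : forall x, le x x;
  le_antisym : forall x y, le x y -> le y x -> x = y;
  le_trans : forall x y z, le x y -> le y z -> le x z;
  le_zero : forall x, le zero x;
  le_one : forall x, le x one;
  c_invol : forall x, c (c x) = x;
  c_antitone : forall x y, le x y -> le (c y) (c x)
}.

Definition is_join (x y j : T) : Prop :=
  le x j /\ le y j /\ forall u, le x u -> le y u -> le j u.
Definition is_meet (x y m : T) : Prop :=
  le m x /\ le m y /\ forall u, le u x -> le u y -> le u m.

Definition orthogonal : Prop :=
  forall x y, le x (c y) -> exists j, is_join x y j.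

Definition orthocomplemented : Prop :=
  forall x, is_join x (c x) one.

Definition lower_bound (M : list T) (x : T) : Prop :=
  forall m, In m M -> le x m.

Definition lub_complete : Prop :=
  forall (M : list T) (x : T), lower_bound M x ->
    exists w, lower_bound M w /\ le x w /\
      (forall v, lower_bound M v -> le w v -> v = w).

Definition boolean_algebra : Prop :=
  (forall x y, exists j, is_join x y j) /\
  (forall x y, exists m, is_meet x y m) /\
  (forall x y z a b m1 m2 r,
      is_join y z a -> is_meet x a b ->
      is_meet x y m1 -> is_meet x z m2 -> is_join m1 m2 r -> b = r) /\
  (forall x, is_join x (c x) one /\ is_meet x (c x) zero).

Definition U (A : T -> Prop) : T -> Prop := fun u => forall a, A a -> le a u.
Definition U2 (x y : T) : T -> Prop := fun u => le x u /\ le y u.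
Definition Min (A : T -> Prop) : T -> Prop :=
  fun x => A x /\ forall y, A y -> le y x -> y = x.

(* classical implication x ->_C y := Min U(x', y) *)
Definition implC (x y : T) : T -> Prop := Min (U2 (c x) y).

Definition le1 (A B : T -> Prop) : Prop :=
  forall x, A x -> exists y, B y /\ le x y.
Definition le2 (A B : T -> Prop) : Prop :=
  forall y, B y -> exists x, A x /\ le x y.

Definition singleton (x : T) : T -> Prop := fun w => w = x.
End Defs.

(* Main.v *)
Require Import Defs.
From Stdlib Require Import List.

Section Basics.
Context (T : Type) (le : T -> T -> Prop) (c : T -> T) (zero one : T)
  (HP : bounded_poset_inv le c zero one)
  (Hoc : orthocomplemented le c one).

Let rfl x : le x x := le_refl HP x.
Let tr x y z : le x y -> le y z -> le x z := le_trans HP x y z.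
Let asy x y : le x y -> le y x -> x = y := le_antisym HP x y.
Let cinv x : c (c x) = x := c_invol HP x.
Let cant x y : le x y -> le (c y) (c x) := c_antitone HP x y.

Lemma cswap x y : le x (c y) -> le y (c x).
Proof. intro H. apply cant in H. rewrite cinv in H. exact H. Qed.

Lemma cswap' x y : le (c x) y -> le (c y) x.
Proof. intro H. apply cant in H. rewrite cinv in H. exact H. Qed.

Lemma c_one : c one = zero.
Proof.
  apply asy. 2: apply (le_zero HP).
  pose proof (cant _ _ (le_one HP (c zero))) as H. rewrite cinv in H. exact H.
Qed.

Lemma c_zero : c zero = one.
Proof. rewrite <- c_one. apply cinv. Qed.

Lemma lb_compl w z : le w z -> le w (c z) -> w = zero.
Proof.
  intros H1 H2. destruct (Hoc z) as [_ [_ H]].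
  assert (E : c w = one).
  { apply asy. apply (le_one HP). apply H. apply cswap; auto. apply cant; auto. }
  rewrite <- (cinv w), E. apply c_one.
Qed.

Lemma join_sym a b j : is_join le a b j -> is_join le b a j.
Proof. intros [h1 [h2 h3]]. split; [|split]; auto. Qed.

Lemma meet_sym a b j : is_meet le a b j -> is_meet le b a j.
Proof. intros [h1 [h2 h3]]. split; [|split]; auto. Qed.

Lemma join_Min a b j v : is_join le a b j -> Min le (U2 le a b) v -> v = j.
Proof.
  intros [h1 [h2 h3]] [[u1 u2] hm]. symmetry. apply hm. split; auto. auto.
Qed.

Lemma join_in_Min a b j : is_join le a b j -> Min le (U2 le a b) j.
Proof.
  intros [h1 [h2 h3]]. split. split; auto.
  intros y [y1 y2] hy. apply asy; auto.
Qed.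

Lemma meet_c x y m : is_meet le x y m -> is_join le (c x) (c y) (c m).
Proof.
  intros [h1 [h2 h3]]. split; [|split]; try (apply cant; auto).
  intros u H1 H2. apply cswap'. apply h3; apply cswap'; auto.
Qed.

Lemma join_c x y m : is_join le x y m -> is_meet le (c x) (c y) (c m).
Proof.
  intros [h1 [h2 h3]]. split; [|split]; try (apply cant; auto).
  intros u H1 H2. apply cswap. apply h3; apply cswap; auto.
Qed.

Lemma U2_Min_one a b v : (forall t, le t (c a) -> le t (c b) -> t = zero) ->
  Min le (U2 le a b) v -> v = one.
Proof.
  intros H [[u1 u2] _].
  assert (E : c v = zero). { apply H; apply cant; auto. }
  rewrite <- (cinv v), E. apply c_zero.
Qed.

End Basics.

Section Dir2.
Context (T : Type) (le : T -> T -> Prop) (c : T -> T) (zero one : T)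
  (HP : bounded_poset_inv le c zero one)
  (Horth : orthogonal le c)
  (Hoc : orthocomplemented le c one)
  (Hlub : lub_complete le)
  (odot : T -> T -> (T -> Prop))
  (Hod : forall x y z,
      le1 le (odot x y) (singleton z) <->
      le2 le (singleton x) (implC le c y z)).

Let rfl x : le x x := le_refl HP x.
Let tr x y z : le x y -> le y z -> le x z := le_trans HP x y z.
Let asy x y : le x y -> le y x -> x = y := le_antisym HP x y.
Let cinv x : c (c x) = x := c_invol HP x.
Let cant x y : le x y -> le (c y) (c x) := c_antitone HP x y.
Let cswap' := cswap' _ _ _ _ _ HP.
Let join_sym := join_sym T le.

Lemma L1 w z u : le w z -> (forall v, Min le (U2 le u (c z)) v -> le w v) -> le w u.
Proof.
  intros Hwz Hv.
  assert (A1 : le1 le (odot w (c u)) (singleton z)).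
  { apply Hod. intros v Hm. exists w. split. reflexivity.
    unfold implC in Hm. rewrite cinv in Hm. destruct Hm as [[_ h] _]. eauto. }
  assert (A2 : le1 le (odot w (c u)) (singleton (c z))).
  { apply Hod. intros v Hm. exists w. split. reflexivity.
    unfold implC in Hm. rewrite cinv in Hm. auto. }
  assert (A3 : le1 le (odot w (c u)) (singleton zero)).
  { intros a Ha. exists zero. split. reflexivity.
    destruct (A1 a Ha) as [y1 [e1 l1]]. destruct (A2 a Ha) as [y2 [e2 l2]].
    unfold singleton in *. subst. rewrite (lb_compl _ _ _ _ _ HP Hoc a z l1 l2). auto. }
  apply Hod in A3.
  destruct (A3 u) as [x [ex lx]].
  - unfold implC. rewrite cinv. split. split; auto. apply (le_zero HP).
    intros y [y1 y2] hy. apply asy; auto.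
  - unfold singleton in ex. subst. exact lx.
Qed.

Lemma L1' w z u j : le w z -> is_join le u (c z) j -> le w j -> le w u.
Proof.
  intros H1 Hj H2. apply (L1 w z u H1). intros v Hv.
  rewrite (join_Min _ le u (c z) j v Hj Hv). exact H2.
Qed.

Lemma join_ex a b : le a (c b) -> exists j, is_join le a b j.
Proof. apply Horth. Qed.

(* orthomodularity-like *)
Lemma OM m x j0 s : le m x -> is_join le (c x) m j0 -> is_join le m (c j0) s -> le x s.
Proof.
  intros Hmx Hj0 Hs.
  destruct Hj0 as [j1 [j2 j3]]. destruct Hs as [s1 [s2 s3]].
  assert (Hsx : le s x).
  { apply s3; auto. }
  destruct (join_ex s (c x)) as [k [k1 [k2 k3]]].
  { rewrite cinv. auto. }
  apply (L1' x x s k (rfl x)); [split; [|split]; auto|].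
  assert (j0k : le j0 k). { apply j3; eauto. }
  destruct (Hoc j0) as [_ [_ h]].
  apply tr with one. apply (le_one HP). apply h; eauto.
Qed.

Lemma meet_ex x y : exists m, is_meet le x y m.
Proof.
  destruct (Hlub (x :: y :: nil) zero) as [m [Hlb [_ Hmax]]].
  { intros t Ht. apply (le_zero HP). }
  assert (mx : le m x) by (apply Hlb; simpl; auto).
  assert (my : le m y) by (apply Hlb; simpl; auto).
  destruct (join_ex (c x) m) as [j0 Hj0]. { apply cant; auto. }
  destruct (join_ex m (c j0)) as [s Hs]. { rewrite cinv. apply Hj0. }
  pose proof (OM m x j0 s mx Hj0 Hs) as Hxs.
  exists m. split; [|split]; auto.
  intros w wx wy.
  assert (Ld : forall v, le v (c j0) -> le v y -> v = zero).
  { intros v v1 v2.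
    assert (vx : le v x). { apply tr with (c j0); auto. apply cswap'. apply Hj0. }
    assert (vm : le v (c m)). { apply tr with (c j0); auto. apply cant. apply Hj0. }
    destruct (join_ex v m vm) as [t [t1 [t2 t3]]].
    assert (tm : t = m).
    { apply Hmax; auto. intros q Hq. simpl in Hq. destruct Hq as [<-|[<-|[]]]; auto. }
    subst t. apply (lb_compl _ _ _ _ _ HP Hoc v m); auto. }
  assert (wd : le w (c (c j0))).
  { apply (L1 w y (c (c j0)) wy). intros v Hv.
    rewrite (U2_Min_one _ _ _ _ _ HP (c (c j0)) (c y) v). apply (le_one HP).
    intros t t1 t2. rewrite cinv in t1. rewrite cinv in t2. apply Ld; auto. auto. }
  apply (L1' w (c (c j0)) m s wd). rewrite cinv. exact Hs. eauto.
Qed.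

Lemma join_ex_all x y : exists j, is_join le x y j.
Proof.
  destruct (meet_ex (c x) (c y)) as [m Hm]. exists (c m).
  pose proof (meet_c _ _ _ _ _ HP _ _ _ Hm) as H. rewrite !cinv in H. exact H.
Qed.

Lemma comm x y m1 m2 e : is_meet le x y m1 -> is_meet le x (c y) m2 ->
  is_join le m1 m2 e -> le x e.
Proof.
  intros H1 H2 He.
  assert (ex : le e x). { apply He. apply H1. apply H2. }
  destruct (join_ex (c x) e) as [j0 Hj0]. { apply cant; auto. }
  destruct (join_ex e (c j0)) as [s Hs]. { rewrite cinv. apply Hj0. }
  pose proof (OM e x j0 s ex Hj0 Hs) as Hxs.
  assert (dx : le (c j0) x). { apply cswap'. apply Hj0. }
  assert (de : le (c j0) (c e)). { apply cant. apply Hj0. }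
  assert (d1 : le (c j0) (c y)).
  { apply (L1' (c j0) x (c y) (c m1) dx).
    apply join_sym. apply (meet_c _ _ _ _ _ HP _ _ _ H1).
    apply tr with (c e); auto. apply cant. apply He. }
  assert (d2 : le (c j0) y).
  { pose proof (meet_c _ _ _ _ _ HP _ _ _ H2) as H. rewrite cinv in H.
    apply (L1' (c j0) x y (c m2) dx). apply join_sym. exact H.
    apply tr with (c e); auto. apply cant. apply He. }
  assert (d0 : c j0 = zero) by (apply (lb_compl _ _ _ _ _ HP Hoc _ y); auto).
  apply tr with s; auto. apply Hs. apply rfl. rewrite d0. apply (le_zero HP).
Qed.

Lemma dir2 : boolean_algebra le c zero one.
Proof.
  split; [exact join_ex_all|split; [exact meet_ex|split]].
  - intros x y z a b m1 m2 r Ha Hb Hm1 Hm2 Hr.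
    apply asy.
    + destruct (meet_ex b y) as [n1 Hn1]. destruct (meet_ex b (c y)) as [n2 Hn2].
      destruct (join_ex_all n1 n2) as [e He].
      apply tr with e. apply (comm b y n1 n2 e Hn1 Hn2 He).
      apply He.
      * apply tr with m1. 2: apply Hr. apply Hm1.
        apply tr with b. apply Hn1. apply Hb. apply Hn1.
      * apply tr with m2. 2: apply Hr. apply Hm2.
        apply tr with b. apply Hn2. apply Hb.
        apply (L1' n2 (c y) z a). apply Hn2. rewrite cinv. apply join_sym; auto.
        apply tr with b. apply Hn2. apply Hb.
    + apply Hr.
      * apply Hb. apply Hm1. apply tr with y. apply Hm1. apply Ha.
      * apply Hb. apply Hm2. apply tr with z. apply Hm2. apply Ha.
  - intros x. split. apply Hoc. split. apply (le_zero HP). split. apply (le_zero HP).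
    intros u u1 u2. rewrite (lb_compl _ _ _ _ _ HP Hoc u x u1 u2). apply rfl.
Qed.

End Dir2.

Section Dir1.
Context (T : Type) (le : T -> T -> Prop) (c : T -> T) (zero one : T)
  (HP : bounded_poset_inv le c zero one)
  (HB : boolean_algebra le c zero one).

Let rfl x : le x x := le_refl HP x.
Let tr x y z : le x y -> le y z -> le x z := le_trans HP x y z.
Let asy x y : le x y -> le y x -> x = y := le_antisym HP x y.

Lemma dir1 : exists odot : T -> T -> (T -> Prop),
    forall x y z,
      le1 le (odot x y) (singleton z) <->
      le2 le (singleton x) (implC le c y z).
Proof.
  destruct HB as [Hj [Hm [Hd Hc]]].
  exists (fun x y => is_meet le x y).
  intros x y z.
  destruct (Hj (c y) z) as [j Hjj].
  split.
  - intros H v Hv. exists x. split. reflexivity.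
    rewrite (join_Min _ le _ _ j v Hjj Hv).
    destruct (Hm x y) as [m Hmm].
    destruct (H m Hmm) as [z' [ez mz]]. unfold singleton in ez. subst z'.
    destruct (Hm x (c y)) as [m2 Hm2].
    destruct (Hj m m2) as [r Hr].
    assert (Hx1 : is_meet le x one x).
    { split. apply rfl. split. apply (le_one HP). auto. }
    destruct (Hc y) as [Hy1 _].
    rewrite (Hd x y (c y) one x m m2 r Hy1 Hx1 Hmm Hm2 Hr).
    apply Hr. apply tr with z; auto. apply Hjj.
    apply tr with (c y). apply Hm2. apply Hjj.
  - intros H a Ha. exists z. split. reflexivity.
    destruct (H j (join_in_Min _ _ _ _ _ HP _ _ _ Hjj)) as [x' [ex xj]].
    unfold singleton in ex. subst x'.
    destruct (Hm y j) as [b Hb]. destruct (Hm y z) as [m2 Hm2].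
    destruct (Hj zero m2) as [r Hr].
    destruct (Hc y) as [_ Hy0].
    rewrite (Hd y (c y) z j b zero m2 r Hjj Hb Hy0 Hm2 Hr) in Hb.
    apply tr with r. apply Hb. apply Ha. apply tr with x. apply Ha. exact xj.
    apply Hr. apply (le_zero HP). apply Hm2.
Qed.

End Dir1.

Theorem proposition3 (T : Type) (le : T -> T -> Prop) (c : T -> T) (zero one : T)
  (HP : bounded_poset_inv le c zero one)
  (Horth : orthogonal le c)
  (Hoc : orthocomplemented le c one)
  (Hlub : lub_complete le) :
  boolean_algebra le c zero one <->
  exists odot : T -> T -> (T -> Prop),
    forall x y z,
      le1 le (odot x y) (singleton z) <->
      le2 le (singleton x) (implC le c y z).
Proof.
  split.
  - intro HB. exact (dir1 _ _ _ _ _ HP HB).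
  - intros [odot Hod]. exact (dir2 _ _ _ _ _ HP Horth Hoc Hlub odot Hod).
Qed.
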